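(* Let $\lambda\in\mathbb R$, $\alpha=1-\lambda$, and let $\mathcal Q_\lambda$ be a $\lambda$-exponential family satisfying Assumption A and Assumption B (with common support $S_\lambda$). Let $\pi\in\mathcal P(\mathcal X,m)$ be $\mathcal Q_\lambda$-compatible. If $\vartheta_*\in\operatorname{dom}\varphi_\lambda$ satisfies $q^{(\alpha)}_{\vartheta_*}(T)=\pi^{(\alpha)}_{|S_\lambda}(T)$, then $\vartheta_*$ is a solution of the problem $\min_{q_\vartheta\in\mathcal Q_\lambda}RD_\alpha(\pi,q_\vartheta)$.
   Context: $\mathcal H$ is a finite-dimensional real Hilbert space; $\mathcal X$ a measurable space with measure $m$; $\mathcal P(\mathcal X,m)$ the probability densities w.r.t. $m$. For a density $p$ and measurable $f$, $p(f)=\int fp\,dm$. Conventions $\log s=-\infty$ for $s\le0$, $\exp(-\infty)=0$. Coupling $c_\lambda(u,v)=\frac1\lambda\log(1+\lambda\langle u,v\rangle)$ ($\lambda\ne0$), $c_0=\langle\cdot,\cdot\rangle$. For measurable $T:\mathcal X\to\mathcal H$: $\varphi_\lambda(\vartheta)=\log\int\exp(c_\lambda(\vartheta,T))dm$, $\operatorname{dom}\varphi_\lambda=\{\varphi_\lambda<+\infty\}$, $q_\vartheta=\exp(c_\lambda(\vartheta,T)-\varphi_\lambda(\vartheta))$, $\mathcal Q_\lambda=\{q_\vartheta:\vartheta\in\operatorname{dom}\varphi_\lambda\}$, support $S_\vartheta=\{x:1+\lambda\langle\vartheta,T(x)\rangle>0\}$. Escort: $p^{(\alpha)}=p^\alpha/\int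 p^\alpha dm$; $p_{|Y}=p\mathbf 1_Y$ and $p^{(\alpha)}_{|Y}$ is the escort of $p_{|Y}$. Rényi divergence: $RD_\alpha(p_1,p_2)=\frac1{\alpha-1}\log\int p_1^\alpha p_2^{1-\alpha}dm$ for $\alpha\ne1$, $RD_1(p_1,p_2)=KL(p_1,p_2)=\int p_1\log(p_1/p_2)dm$, with value $+\infty$ when undefined. Compatibility: $p$ is $q_\vartheta$-compatible if $\int p_{|S_\vartheta}^\alpha dm\in(0,\infty)$ and $\int Tp_{|S_\vartheta}^\alpha dm$ has finite components; $\mathcal Q_\lambda$-compatible if this holds for every $\vartheta\in\operatorname{dom}\varphi_\lambda$. Assumption A: $\alpha>0$ and $\varphi_\lambda$ is proper (never $-\infty$, nonempty domain). Assumption B: there is a nonempty $S_\lambda\subset\mathcal X$ with $S_\vartheta=S_\lambda$ for all $\vartheta\in\operatorname{dom}\varphi_\lambda$, and every $q_\vartheta\in\mathcal Q_\lambda$ is $\mathcal Q_\lambda$-compatible. *)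

(* Defs.v *)
From HB Require Import structures.
From mathcomp Require Import all_boot all_order all_algebra.
From mathcomp Require Import all_classical all_reals all_analysis.
Set Implicit Arguments. Unset Strict Implicit. Unset Printing Implicit Defensive.
Import Order.TTheory GRing.Theory Num.Theory.
Local Open Scope classical_set_scope.
Local Open Scope ring_scope.

Section LambdaExp.
Variables (R : realType) (n : nat) (d : measure_display) (X : measurableType d).
Variable (m : {measure set X -> \bar R}).

(* The finite-dimensional real Hilbert space H is modelled as R^n = 'rV[R]_n
   with the standard inner product. *)
Definition dotv (u v : 'rV[R]_n) : R := \sum_(i < n) u 0 i * v 0 i.

(* exp(c_lam(u,v)) as a function of t = <u,v>, with the convention that it
   vanishes outside the support {1 + lam t > 0} (lam <> 0). *)
Definition expc (lam t : R) : R :=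
  if lam == 0 then expR t
  else if 0 < 1 + lam * t then (1 + lam * t) `^ lam^-1 else 0.

Definition elog (z : \bar R) : \bar R :=
  match z with
  | EFin r => if (0 < r)%R then EFin (ln r) else -oo%E
  | +oo%E => +oo%E
  | -oo%E => -oo%E
  end.

Variables (T : X -> 'rV[R]_n) (lam : R).

Definition phi (th : 'rV[R]_n) : \bar R :=
  elog (\int[m]_x (expc lam (dotv th (T x)))%:E)%E.

Definition dom_phi (th : 'rV[R]_n) : Prop := (phi th < +oo)%E.

Definition qfam (th : 'rV[R]_n) (x : X) : R :=
  expc lam (dotv th (T x)) * expR (- fine (phi th)).

Definition supp (th : 'rV[R]_n) : set X :=
  [set x | 0 < 1 + lam * dotv th (T x)].

Definition restr (p : X -> R) (Y : set X) (x : X) : R := \1_Y x * p x.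

Definition is_density (p : X -> R) : Prop :=
  measurable_fun setT p /\ (forall x, 0 <= p x) /\
  (\int[m]_x (p x)%:E = 1)%E.

Variable alpha : R.

Definition compatible (p : X -> R) (th : 'rV[R]_n) : Prop :=
  let pS := restr p (supp th) in
  (0 < \int[m]_x ((pS x) `^ alpha)%:E < +oo)%E /\
  (forall i : 'I_n, m.-integrable setT (fun x => (T x 0 i * (pS x) `^ alpha)%:E)).

Definition Qcompatible (p : X -> R) : Prop :=
  forall th, dom_phi th -> compatible p th.

Definition AssumptionA : Prop :=
  0 < alpha /\ (forall th, phi th != -oo%E) /\ (exists th, dom_phi th).

Definition AssumptionB (S : set X) : Prop :=
  S !=set0 /\ (forall th, dom_phi th -> supp th = S) /\
  (forall th, dom_phi th -> Qcompatible (qfam th)).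

Definition escort_mean (p : X -> R) : 'rV[R]_n :=
  \row_i (Rintegral m setT (fun x => T x 0 i * (p x) `^ alpha) /
          Rintegral m setT (fun x => (p x) `^ alpha)).

End LambdaExp.

Section Renyi.
Variables (R : realType) (d : measure_display) (X : measurableType d).
Variable (m : {measure set X -> \bar R}).

(* p1^alpha p2^(1-alpha), with 0 when p1 = 0, and the value of the limit
   (0 if alpha < 1, +oo if alpha > 1) when p1 > 0 = p2 *)
Definition rd_integrand (alpha : R) (p1 p2 : X -> R) (x : X) : \bar R :=
  if p1 x == 0 then 0%E
  else if p2 x == 0 then (if alpha < 1 then 0%E else +oo%E)
  else ((p1 x) `^ alpha * (p2 x) `^ (1 - alpha))%:E.

Definition kl_integrand (p1 p2 : X -> R) (x : X) : \bar R :=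
  if p1 x == 0 then 0%E
  else if p2 x == 0 then +oo%E
  else (p1 x * ln (p1 x / p2 x))%:E.

Definition KL (p1 p2 : X -> R) : \bar R := (\int[m]_x kl_integrand p1 p2 x)%E.

Definition renyi (alpha : R) (p1 p2 : X -> R) : \bar R :=
  if alpha == 1 then KL p1 p2
  else (((alpha - 1)^-1)%:E * elog (\int[m]_x rd_integrand alpha p1 p2 x))%E.

End Renyi.

(* Main.v *)
Require Import Defs.
From HB Require Import structures.
From mathcomp Require Import all_boot all_order all_algebra.
From mathcomp Require Import all_classical all_reals all_analysis.
From mathcomp Require Import measurable_realfun lebesgue_integral.
From mathcomp Require Import ring lra.
Set Implicit Arguments. Unset Strict Implicit. Unset Printing Implicit Defensive.
Import Order.TTheory GRing.Theory Num.Theory.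
Local Open Scope classical_set_scope.
Local Open Scope ring_scope.


Section Gen.
Context (R : realType) (d : measure_display) (X : measurableType d)
  (m : {measure set X -> \bar R}).

Lemma integrableD_R (f g : X -> R) :
  m.-integrable setT (EFin \o f) -> m.-integrable setT (EFin \o g) ->
  m.-integrable setT (EFin \o (fun x => f x + g x)).
Proof.
move=> hf hg; apply: (eq_integrable measurableT ((EFin \o f) \+ (EFin \o g))) => //.
exact: integrableD.
Qed.

Lemma integrableZ_R (c : R) (f : X -> R) :
  m.-integrable setT (EFin \o f) ->
  m.-integrable setT (EFin \o (fun x => c * f x)).
Proof.
move=> hf; apply: (eq_integrable measurableT (fun x => (c%:E * (EFin \o f) x)%E)).
  by move=> x _ /=; rewrite EFinM.
exact: integrableZl.
Qed.

Lemma Rint_sum (I : Type) (s : seq I) (f : I -> X -> R) :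
  (forall i, m.-integrable setT (EFin \o f i)) ->
  m.-integrable setT (EFin \o (fun x => \sum_(i <- s) f i x)) /\
  Rintegral m setT (fun x => \sum_(i <- s) f i x) =
  \sum_(i <- s) Rintegral m setT (f i).
Proof.
move=> hf; elim: s => [|a s [ih1 ih2]].
  split.
    apply: (eq_integrable measurableT (cst 0%E)); last exact: integrable0.
    by move=> x _ /=; rewrite big_nil.
  rewrite big_nil; under eq_Rintegral do rewrite big_nil.
  by rewrite /Rintegral integral0.
split.
  apply: (eq_integrable measurableT (EFin \o (fun x => f a x + \sum_(i <- s) f i x))).
    by move=> x _ /=; rewrite big_cons.
  exact: integrableD_R.
under eq_Rintegral do rewrite big_cons.
by rewrite RintegralD // big_cons ih2.
Qed.

Lemma int_fin (f : X -> R) : m.-integrable setT (EFin \o f) ->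
  (\int[m]_x (f x)%:E = (Rintegral m setT f)%:E)%E.
Proof. by move=> hf; rewrite /Rintegral fineK //; exact: integrable_fin_num. Qed.


Lemma Rint_lin (I : Type) (s : seq I) (F0 : X -> R) (F : I -> X -> R)
  (c : I -> R) (k : R) :
  m.-integrable setT (EFin \o F0) ->
  (forall i, m.-integrable setT (EFin \o F i)) ->
  m.-integrable setT (EFin \o (fun x => F0 x + k * \sum_(i <- s) c i * F i x)) /\
  Rintegral m setT (fun x => F0 x + k * \sum_(i <- s) c i * F i x) =
  Rintegral m setT F0 + k * \sum_(i <- s) c i * Rintegral m setT (F i).
Proof.
move=> h0 hF.
have hcF : forall i, m.-integrable setT (EFin \o (fun x => c i * F i x)).
  by move=> i; exact: integrableZ_R.
have [iS eS] := Rint_sum s hcF.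
have iks := integrableZ_R k iS.
split; first exact: integrableD_R.
rewrite RintegralD // RintegralZl // eS; congr (_ + _ * _).
by apply: eq_bigr => i _; rewrite RintegralZl.
Qed.

End Gen.

Section Gen2.
Context (R : realType) (d : measure_display) (X : measurableType d)
  (m : {measure set X -> \bar R}).
Local Open Scope ereal_scope.

Lemma integralD_ge0_int (f : X -> \bar R) (g : X -> R) :
  (forall x, 0 <= f x) -> measurable_fun setT f ->
  m.-integrable setT (EFin \o g) ->
  \int[m]_x (f x + (g x)%:E) = \int[m]_x f x + (Rintegral m setT g)%:E.
Proof.
move=> f0 mf ig.
have mg : measurable_fun setT (EFin \o g) by exact: measurable_int ig.
have [fint|] := ltP (\int[m]_x f x) +oo.
  have iF : m.-integrable setT f.
    apply/integrableP; split => //.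
    under eq_integral do rewrite gee0_abs //; exact: fint.
  rewrite (integralD measurableT iF ig) int_fin //.
rewrite leye_eq => /eqP finf; rewrite finf.
set phi := fun x => f x + (g x)%:E.
have mphi : measurable_fun setT phi by exact: emeasurable_funD.
have iag : m.-integrable setT (abse \o (EFin \o g)) by exact: integrable_abse.
have hag : \int[m]_x `|(g x)%:E| < +oo.
  by case/integrableP: ig.
have hneg : \int[m]_x phi^\- x < +oo.
  apply: le_lt_trans hag; apply: ge0_le_integral => //.
  - exact: measurable_funeneg.
  - exact: measurableT_comp.
  move=> x _; rewrite funenegE /phi; have := f0 x.
  case: (f x) => [r| |] //=; rewrite ?lee_fin => r0.
    rewrite /maxe; case: ifP => _ //=; rewrite ?lee_fin.
    by rewrite -normrN; apply: le_trans (ler_norm _); lra.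
  by rewrite ge_max leNye /= lee_fin normr_ge0.
have hpos : \int[m]_x phi^\+ x = +oo.
  apply/eqP; rewrite eq_le leey /=.
  have : \int[m]_x f x <= \int[m]_x (phi^\+ x + `|(g x)%:E|).
    apply: ge0_le_integral => //.
    - apply: emeasurable_funD; first exact: measurable_funepos.
      exact: measurableT_comp.
    move=> x _; rewrite funeposE /phi; have := f0 x.
    case: (f x) => [r| |] //=; rewrite ?lee_fin => r0.
      rewrite -EFin_max -EFinD lee_fin.
      have h1 := ler_norm (- g x); rewrite normrN in h1.
      have h2 : (r + g x <= Num.max (r + g x) 0)%R by rewrite le_max lexx.
      lra.
  rewrite finf (ge0_integralD m measurableT (f1 := phi^\+)
    (f2 := fun x => `|(g x)%:E|)); first last.
  - exact: measurableT_comp.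
  - by move=> x _.
  - exact: measurable_funepos.
  - by move=> x _; rewrite funepos_ge0.
  move=> h; rewrite leNgt; apply/negP => hlt.
  move: h; rewrite leNgt => /negP; apply.
  by rewrite lte_add_pinfty.
rewrite integralE hpos.
have : \int[m]_x phi^\- x \is a fin_num.
  by rewrite ge0_fin_numE // integral_ge0 // => x _; rewrite funeneg_ge0.
by case: (\int[m]_x phi^\- x) => //.
Qed.

End Gen2.

Section Young.
Context (R : realType).

Lemma powR_exp (a l : R) : 0 < a -> a `^ l = expR (l * ln a).
Proof. by move=> a0; rewrite /powR gt_eqF. Qed.

Lemma expR_tangent (c s : R) : expR c * (1 + (s - c)) <= expR s.
Proof.
have -> : expR s = expR c * expR (s - c) by rewrite -expRD addrC subrK.
by apply: ler_wpM2l; [exact: expR_ge0| exact: expR_ge1Dx].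
Qed.

Lemma young_pos (l a b : R) : 0 < a -> 0 < b -> 0 <= l <= 1 ->
  a `^ l * b `^ (1 - l) <= l * a + (1 - l) * b.
Proof.
move=> a0 b0 /andP[l0 l1].
rewrite !powR_exp // -expRD.
set c := l * ln a + (1 - l) * ln b.
have Ha := expR_tangent c (ln a); rewrite lnK ?posrE // in Ha.
have Hb := expR_tangent c (ln b); rewrite lnK ?posrE // in Hb.
have H1 : l * (expR c * (1 + (ln a - c))) <= l * a by apply: ler_wpM2l.
have H2 : (1 - l) * (expR c * (1 + (ln b - c))) <= (1 - l) * b.
  by apply: ler_wpM2l => //; lra.
have E : l * (expR c * (1 + (ln a - c))) + (1 - l) * (expR c * (1 + (ln b - c)))
  = expR c by rewrite /c; ring.
lra.
Qed.

Lemma young_neg (l a b : R) : 0 < a -> 0 < b -> l <= 0 ->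
  l * a + (1 - l) * b <= a `^ l * b `^ (1 - l).
Proof.
move=> a0 b0 l0.
rewrite !powR_exp // -expRD.
set c := l * ln a + (1 - l) * ln b.
have Hc := expR_tangent (ln b) c; rewrite lnK ?posrE // in Hc.
have Ha := expR_tangent (ln b) (ln a); rewrite !lnK ?posrE // in Ha.
have H1 : (- l) * (b * (1 + (ln a - ln b))) <= (- l) * a.
  by apply: ler_wpM2l => //; lra.
have E : b * (1 + (c - ln b)) + (- l) * (b * (1 + (ln a - ln b)))
  = (1 - l) * b by rewrite /c; ring.
lra.
Qed.

Lemma powR_inv (z l : R) : 0 < z -> z^-1 `^ l = (z `^ l)^-1.
Proof.
move=> z0; rewrite !powR_exp ?invr_gt0 // lnV ?posrE //.
by rewrite mulrN expRN.
Qed.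


Definition ee (l u : R) := if 0 < u then u `^ l^-1 else 0.

Lemma ee_ge0 l u : 0 <= ee l u.
Proof. by rewrite /ee; case: ifP => // _; exact: powR_ge0. Qed.

Lemma ee_gt0 l u : 0 < u -> 0 < ee l u.
Proof. by move=> u0; rewrite /ee u0 powR_gt0. Qed.

Lemma ee_eq0 l u : ~~ (0 < u) -> ee l u = 0.
Proof. by rewrite /ee => /negbTE ->. Qed.

Lemma ee_pow l u : l != 0 -> 0 < u -> (ee l u) `^ l = u.
Proof.
move=> l0 u0; rewrite /ee u0 -powRrM mulVf // powRr1 //; exact: ltW.
Qed.

Lemma pw_young (l uu us z zs : R) : l != 0 -> l < 1 -> 0 < z -> 0 < zs ->
  (0 < uu) = (0 < us) ->
  and (0 < l -> uu * (ee l us / zs) `^ (1 - l) <=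
     z `^ l * (l * (ee l uu / z) + (1 - l) * (ee l us / zs)))
  (l < 0 -> z `^ l * (l * (ee l uu / z) + (1 - l) * (ee l us / zs)) <=
     uu * (ee l us / zs) `^ (1 - l)).
Proof.
move=> l0 l1 z0 zs0 huu.
have [us0|us0] := boolP (0 < us); last first.
  have uu0 : ~~ (0 < uu) by rewrite huu.
  rewrite !ee_eq0 // !mul0r powR0 ?mulr0 ?addr0 ?mulr0; last by rewrite subr_eq0 eq_sym lt_eqF.
  by split.
have uu0 : 0 < uu by rewrite huu.
have qpos : 0 < ee l uu / z by rewrite divr_gt0 // ee_gt0.
have qspos : 0 < ee l us / zs by rewrite divr_gt0 // ee_gt0.
have Huu : uu = z `^ l * (ee l uu / z) `^ l.
  rewrite -powRM; last 2 first; [exact: ltW| exact: ltW|].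
  by rewrite mulrCA divff ?gt_eqF // mulr1 ee_pow.
rewrite {1 4}Huu -!mulrA; split => hl.
  apply: ler_wpM2l; first exact: powR_ge0.
  by apply: young_pos => //; rewrite ltW //= ltW.
apply: ler_wpM2l; first exact: powR_ge0.
by apply: young_neg => //; rewrite ltW.
Qed.

Lemma pw_eq (l us zs : R) : l != 0 -> l < 1 -> 0 < zs ->
  us * (ee l us / zs) `^ (1 - l) = zs `^ l * (ee l us / zs).
Proof.
move=> l0 l1 zs0.
have [us0|us0] := boolP (0 < us); last first.
  rewrite !ee_eq0 // !mul0r powR0 ?mulr0 //.
  by rewrite subr_eq0 eq_sym lt_eqF.
have qspos : 0 < ee l us / zs by rewrite divr_gt0 // ee_gt0.
have Hus : us = zs `^ l * (ee l us / zs) `^ l.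
  rewrite -powRM; last 2 first; [exact: ltW| exact: ltW|].
  by rewrite mulrCA divff ?gt_eqF // mulr1 ee_pow.
rewrite {1}Hus -mulrA -powRD; last by rewrite (gt_eqF qspos) implybT.
by rewrite addrC subrK powRr1 // ltW.
Qed.

Lemma pw_rd (l uu us z pix : R) (G : \bar R) : l != 0 -> l < 1 -> 0 < z ->
  (0 < uu) = (0 < us) -> 0 <= pix ->
  (if pix == 0 then 0%E else if ee l uu / z == 0 then G
    else EFin (pix `^ (1 - l) * (ee l uu / z) `^ (1 - (1 - l)))) =
  (EFin ((z `^ l)^-1 * (uu * (if 0 < us then pix else 0) `^ (1 - l)))%R +
  (if ((0 < `|pix|) && (us <= 0))%R then G else 0%E))%E.
Proof.
move=> l0 l1 z0 huu pi0.
have a0 : (1 - l) != 0 by rewrite subr_eq0 eq_sym lt_eqF.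
have [us0|us0] := boolP (0 < us); last first.
  have uu0 : ~~ (0 < uu) by rewrite huu.
  rewrite ee_eq0 // mul0r eqxx powR0 // !mulr0 add0e.
  have -> : us <= 0 by rewrite leNgt.
  have [->|p0] := eqVneq pix 0; first by rewrite normr0 ltxx.
  by rewrite normr_gt0 p0.
have uu0 : 0 < uu by rewrite huu.
have qpos : 0 < ee l uu / z by rewrite divr_gt0 // ee_gt0.
rewrite (gt_eqF qpos) (_ : us <= 0 = false) ?andbF ?adde0; last first.
  by apply/negbTE; rewrite -ltNge.
have [->|p0] := eqVneq pix 0; first by rewrite powR0 // !mulr0.
congr EFin.
rewrite (_ : 1 - (1 - l) = l); last by ring.
rewrite powRM ?ee_ge0 ?invr_ge0 ?(ltW z0) //.
by rewrite ee_pow // powR_inv //; ring.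
Qed.

End Young.

Section Setup.
Context (R : realType) (n : nat) (d : measure_display) (X : measurableType d)
  (m : {measure set X -> \bar R}) (T : X -> 'rV[R]_n) (lam : R).
Hypothesis mT : forall i : 'I_n, measurable_fun setT (fun x => T x 0 i).

Lemma mdot th : measurable_fun setT (fun x => dotv th (T x)).
Proof.
rewrite /dotv; apply: measurable_sum => i.
exact: measurable_funM (measurable_cst _) (mT i).
Qed.

Lemma mu th : measurable_fun setT (fun x => 1 + lam * dotv th (T x)).
Proof.
apply: measurable_funD; first exact: measurable_cst.
exact: measurable_funM (measurable_cst _) (mdot th).
Qed.

Lemma expcE t : lam != 0 -> expc lam t = ee lam (1 + lam * t).
Proof. by rewrite /expc /ee => /negbTE ->. Qed.

Lemma mexpc th : measurable_fun setT (fun x => expc lam (dotv th (T x))).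
Proof.
rewrite /expc; case: eqP => _.
  apply: (measurableT_comp (f := expR)); [exact: measurable_expR | exact: mdot].
apply: measurable_fun_ifT.
- exact: measurable_fun_ltr (measurable_cst _) (mu th).
- exact: measurableT_comp (measurable_powR _) (mu th).
- exact: measurable_cst.
Qed.

Lemma expc_ge0 t : 0 <= expc lam t.
Proof.
rewrite /expc; case: ifP => _; first exact: expR_ge0.
by case: ifP => _ //; exact: powR_ge0.
Qed.

Lemma dom_facts th : phi m T lam th != -oo%E -> dom_phi m T lam th ->
  exists z, 0 < z /\ (\int[m]_x (expc lam (dotv th (T x)))%:E = z%:E)%E.
Proof.
rewrite /dom_phi /phi.
have : (0 <= \int[m]_x (expc lam (dotv th (T x)))%:E)%E.
  by apply: integral_ge0 => x _; rewrite lee_fin expc_ge0.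
case: (\int[m]_x _)%E => [r| |] //= r0.
case: ifP => // rpos _ _; by exists r.
Qed.

Lemma phiE th z : 0 < z ->
  (\int[m]_x (expc lam (dotv th (T x)))%:E = z%:E)%E ->
  phi m T lam th = (ln z)%:E.
Proof. by move=> z0 hz; rewrite /phi hz /= z0. Qed.

Lemma qfamE th z : 0 < z ->
  (\int[m]_x (expc lam (dotv th (T x)))%:E = z%:E)%E ->
  qfam m T lam th = fun x => expc lam (dotv th (T x)) / z.
Proof.
move=> z0 hz; apply/funext => x; rewrite /qfam (phiE z0 hz) /=.
by rewrite expRN lnK // posrE.
Qed.

Lemma int_expc th z : 0 < z ->
  (\int[m]_x (expc lam (dotv th (T x)))%:E = z%:E)%E ->
  m.-integrable setT (EFin \o (fun x => expc lam (dotv th (T x)))).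
Proof.
move=> z0 hz; apply/integrableP; split.
  exact/measurable_EFinP/mexpc.
under eq_integral do rewrite gee0_abs ?lee_fin ?expc_ge0 //.
by rewrite hz ltry.
Qed.

Lemma int_q th z : 0 < z ->
  (\int[m]_x (expc lam (dotv th (T x)))%:E = z%:E)%E ->
  m.-integrable setT (EFin \o (fun x => expc lam (dotv th (T x)) / z)) /\
  Rintegral m setT (fun x => expc lam (dotv th (T x)) / z) = 1.
Proof.
move=> z0 hz; have ie := int_expc z0 hz.
split.
  apply: (eq_integrable measurableT (EFin \o (fun x => z^-1 * expc lam (dotv th (T x))))).
    by move=> x _ /=; rewrite mulrC.
  exact: integrableZ_R.
under eq_Rintegral do rewrite mulrC.
by rewrite RintegralZl // /Rintegral hz /= mulVf // gt_eqF.
Qed.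

End Setup.

Section Mid.
Context (R : realType) (n : nat) (d : measure_display) (X : measurableType d)
  (m : {measure set X -> \bar R}) (T : X -> 'rV[R]_n) (lam : R).
Hypothesis mT : forall i : 'I_n, measurable_fun setT (fun x => T x 0 i).

Lemma eqI (f g : X -> \bar R) : m.-integrable setT f -> (forall x, f x = g x) ->
  m.-integrable setT g.
Proof. by move=> hf fg; apply: (eq_integrable measurableT f) => // x _. Qed.

Lemma lin_F (th : 'rV[R]_n) (F : X -> R) :
  m.-integrable setT (EFin \o F) ->
  (forall i, m.-integrable setT (EFin \o (fun x => T x 0 i * F x))) ->
  m.-integrable setT (EFin \o (fun x => (1 + lam * dotv th (T x)) * F x)) /\
  Rintegral m setT (fun x => (1 + lam * dotv th (T x)) * F x) =
  Rintegral m setT F + lam * \sum_(i < n) th 0 i *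
    Rintegral m setT (fun x => T x 0 i * F x).
Proof.
move=> hF hTF.
have [h1 h2] := Rint_lin (index_enum 'I_n) (fun i => th 0 i) lam hF hTF.
have e : forall x, (1 + lam * dotv th (T x)) * F x =
    F x + lam * \sum_(i <- index_enum 'I_n) th 0 i * (T x 0 i * F x).
  move=> x; rewrite /dotv mulrDl mul1r -mulrA big_distrl /=.
  congr (_ + _ * _); apply: eq_bigr => i _; ring.
split; first by apply: (eqI h1) => x /=; rewrite e.
rewrite -h2; apply: eq_Rintegral => x _; exact: e.
Qed.

Lemma restr_ee (ths : 'rV[R]_n) zs x :
  restr (fun x => ee lam (1 + lam * dotv ths (T x)) / zs) (supp T lam ths) x =
  ee lam (1 + lam * dotv ths (T x)) / zs.
Proof.
rewrite /restr indicE; have [h|h] := boolP (0 < 1 + lam * dotv ths (T x)).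
  by rewrite mem_set //= mul1r.
by rewrite ee_eq0 // mul0r mulr0.
Qed.

Lemma restr_if (pi : X -> R) (ths : 'rV[R]_n) x :
  restr pi (supp T lam ths) x =
  if 0 < 1 + lam * dotv ths (T x) then pi x else 0.
Proof.
rewrite /restr indicE; have [h|h] := boolP (0 < 1 + lam * dotv ths (T x)).
  by rewrite mem_set //= mul1r.
rewrite (_ : (x \in supp T lam ths) = false) ?mul0r //.
by apply/negbTE/negP; rewrite inE /=; exact/negP.
Qed.

Lemma int_pow (f : X -> R) (a : R) : measurable_fun setT f ->
  (\int[m]_x (f x `^ a)%:E < +oo)%E ->
  m.-integrable setT (EFin \o (fun x => f x `^ a)).
Proof.
move=> mf hf; apply/integrableP; split.
  by apply/measurable_EFinP; exact: measurableT_comp (measurable_powR _) mf.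
under eq_integral do rewrite gee0_abs ?lee_fin ?powR_ge0 //.
exact: hf.
Qed.

Lemma Rint_gt0 (f : X -> R) :
  (0 < \int[m]_x (f x)%:E < +oo)%E -> 0 < Rintegral m setT f.
Proof. by move=> h; rewrite /Rintegral fine_gt0. Qed.

Lemma Rint_mix (F G : X -> R) (c l : R) :
  m.-integrable setT (EFin \o F) -> m.-integrable setT (EFin \o G) ->
  Rintegral m setT F = 1 -> Rintegral m setT G = 1 ->
  m.-integrable setT (EFin \o (fun x => c * (l * F x + (1 - l) * G x))) /\
  Rintegral m setT (fun x => c * (l * F x + (1 - l) * G x)) = c.
Proof.
move=> iF iG hF hG.
have i1 := integrableZ_R l iF; have i2 := integrableZ_R (1 - l) iG.
have i3 := integrableD_R i1 i2.
split; first exact: integrableZ_R.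
rewrite RintegralZl // RintegralD // !RintegralZl // hF hG; ring.
Qed.

Lemma young_int (th ths : 'rV[R]_n) z zs :
  lam != 0 -> lam < 1 -> 0 < z -> 0 < zs ->
  (forall x, (0 < 1 + lam * dotv th (T x)) = (0 < 1 + lam * dotv ths (T x))) ->
  m.-integrable setT (EFin \o (fun x => ee lam (1 + lam * dotv th (T x)) / z)) ->
  Rintegral m setT (fun x => ee lam (1 + lam * dotv th (T x)) / z) = 1 ->
  m.-integrable setT (EFin \o (fun x => ee lam (1 + lam * dotv ths (T x)) / zs)) ->
  Rintegral m setT (fun x => ee lam (1 + lam * dotv ths (T x)) / zs) = 1 ->
  m.-integrable setT (EFin \o (fun x => (1 + lam * dotv th (T x)) *
      (ee lam (1 + lam * dotv ths (T x)) / zs) `^ (1 - lam))) ->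
  and (0 < lam -> Rintegral m setT (fun x => (1 + lam * dotv th (T x)) *
      (ee lam (1 + lam * dotv ths (T x)) / zs) `^ (1 - lam)) <= z `^ lam)
  (lam < 0 -> z `^ lam <= Rintegral m setT (fun x => (1 + lam * dotv th (T x)) *
      (ee lam (1 + lam * dotv ths (T x)) / zs) `^ (1 - lam))).
Proof.
move=> l0 l1 z0 zs0 huu iq Iq iqs Iqs iL.
have [iM IM] := Rint_mix (z `^ lam) lam iq iqs Iq Iqs.
split => hl.
  rewrite -[leRHS]IM; apply: le_Rintegral => // x _.
  by have [h _] := pw_young l0 l1 z0 zs0 (huu x); exact: h.
rewrite -[leLHS]IM; apply: le_Rintegral => // x _.
by have [_ h] := pw_young l0 l1 z0 zs0 (huu x); exact: h.
Qed.

Lemma eq_int (ths : 'rV[R]_n) zs :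
  lam != 0 -> lam < 1 -> 0 < zs ->
  m.-integrable setT (EFin \o (fun x => ee lam (1 + lam * dotv ths (T x)) / zs)) ->
  Rintegral m setT (fun x => ee lam (1 + lam * dotv ths (T x)) / zs) = 1 ->
  Rintegral m setT (fun x => (1 + lam * dotv ths (T x)) *
      (ee lam (1 + lam * dotv ths (T x)) / zs) `^ (1 - lam)) = zs `^ lam.
Proof.
move=> l0 l1 zs0 iqs Iqs.
have -> : Rintegral m setT (fun x => (1 + lam * dotv ths (T x)) *
      (ee lam (1 + lam * dotv ths (T x)) / zs) `^ (1 - lam)) =
    Rintegral m setT (fun x => zs `^ lam * (ee lam (1 + lam * dotv ths (T x)) / zs)).
  by apply: eq_Rintegral => x _; rewrite pw_eq.
by rewrite RintegralZl // Iqs mulr1.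
Qed.

Lemma rd_int (pi : X -> R) (th ths : 'rV[R]_n) z :
  lam != 0 -> lam < 1 -> 0 < z ->
  (forall x, (0 < 1 + lam * dotv th (T x)) = (0 < 1 + lam * dotv ths (T x))) ->
  measurable_fun setT pi -> (forall x, 0 <= pi x) ->
  m.-integrable setT (EFin \o (fun x => (1 + lam * dotv th (T x)) *
      (if 0 < 1 + lam * dotv ths (T x) then pi x else 0) `^ (1 - lam))) ->
  (\int[m]_x rd_integrand (1 - lam) pi
      (fun x => (ee lam (1 + lam * dotv th (T x)) / z)%R) x =
   ((z `^ lam)^-1 * Rintegral m setT (fun x => (1 + lam * dotv th (T x)) *
      (if 0 < 1 + lam * dotv ths (T x) then pi x else 0) `^ (1 - lam)))%R%:E +
   \int[m]_x (if ((0 < `|pi x|) && (1 + lam * dotv ths (T x) <= 0))%R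
              then (if (1 - lam < 1)%R then 0 else +oo) else 0))%E.
Proof.
move=> l0 l1 z0 huu mpi pi0 iF.
rewrite /rd_integrand.
under eq_integral do rewrite (pw_rd _ l0 l1 z0 (huu _) (pi0 _)).
have iF' := integrableZ_R (z `^ lam)^-1 iF.
rewrite ge0_integralD //; last 4 first.
- move=> x _; rewrite lee_fin mulr_ge0 ?invr_ge0 ?powR_ge0 //.
  have [h|h] := boolP (0 < 1 + lam * dotv ths (T x)).
    by rewrite mulr_ge0 ?powR_ge0 // ltW // huu.
  by rewrite powR0 ?mulr0 // subr_eq0 eq_sym lt_eqF.
- exact: measurable_int iF'.
- by move=> x _; case: ifP => // _; case: ifP.
- apply: measurable_fun_ifT; last exact: measurable_cst.
    apply: measurable_and.
      apply: measurable_fun_ltr; first exact: measurable_cst.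
      by apply: measurableT_comp; [exact: normr_measurable | exact: mpi].
    apply: measurable_fun_ler; last exact: measurable_cst.
    exact: mu.
  exact: measurable_cst.
by rewrite -RintegralZl // int_fin.
Qed.

End Mid.

Lemma elog_le (R : realType) (x y : \bar R) : (x <= y)%E -> (elog x <= elog y)%E.
Proof.
case: x => [r| |]; case: y => [s| |] //=; rewrite ?lee_fin => h;
  rewrite ?leey ?leNye //; case: ifP => r0; rewrite ?leey ?leNye //.
by rewrite (lt_le_trans r0 h) lee_fin ler_ln // posrE (lt_le_trans r0 h).
Qed.

Lemma lee_nmul (R : realType) (c : R) (a b : \bar R) : c < 0 -> (a <= b)%E ->
  (c%:E * b <= c%:E * a)%E.
Proof.
move=> c0 ab; rewrite -(opprK c) EFinN !mulNe leeN2.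
by apply: lee_wpmul2l => //; rewrite lee_fin oppr_ge0 ltW.
Qed.

Lemma arith (R : realType) (c r rs Z Zs : R) : 0 < c -> 0 < Z -> 0 < Zs ->
  c * rs = Zs ->
  and (c * r <= Z -> Z^-1 * r <= Zs^-1 * rs) (Z <= c * r -> Zs^-1 * rs <= Z^-1 * r).
Proof.
move=> c0 Z0 Zs0 hs.
have e : Zs^-1 * rs = c^-1.
  rewrite -hs; field; apply/andP; split; rewrite gt_eqF //.
  by rewrite -hs in Zs0; move: Zs0; rewrite pmulr_rgt0.
rewrite e; split => h.
  by rewrite ler_pdivrMl // mulrC ler_pdivlMl.
by rewrite ler_pdivlMl // mulrC ler_pdivrMl.
Qed.

Lemma div_eq (R : realType) (a b c e : R) : 0 < b -> 0 < c -> a / b = e / c ->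
  a = b / c * e.
Proof.
move=> b0 c0 h; rewrite (_ : a = a / b * b); last by rewrite divfK // gt_eqF.
rewrite h; field; by rewrite gt_eqF.
Qed.

Lemma alg_key (R : realType) (n : nat) (Q A l : R) (t B : 'I_n -> R) : 0 < A ->
  Q + l * \sum_(i < n) t i * (Q / A * B i) =
  Q / A * (A + l * \sum_(i < n) t i * B i).
Proof.
move=> A0; rewrite mulrDr divfK ?gt_eqF //; congr (_ + _).
rewrite mulrCA; congr (_ * _); rewrite big_distrr; apply: eq_bigr => i _ /=.
ring.
Qed.

Section Main.
Context (R : realType) (n : nat) (d : measure_display) (X : measurableType d)
  (m : {measure set X -> \bar R}) (T : X -> 'rV[R]_n) (lam : R).
Hypothesis mT : forall i : 'I_n, measurable_fun setT (fun x => T x 0 i).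

Lemma main_neq0 (S : set X) (pi : X -> R) (ths th : 'rV[R]_n) :
  lam != 0 -> 0 < 1 - lam ->
  (forall th, phi m T lam th != -oo%E) ->
  (forall th, dom_phi m T lam th -> supp T lam th = S) ->
  Qcompatible m T lam (1 - lam) (qfam m T lam ths) ->
  measurable_fun setT pi -> (forall x, 0 <= pi x) ->
  Qcompatible m T lam (1 - lam) pi ->
  dom_phi m T lam ths ->
  escort_mean m T (1 - lam) (qfam m T lam ths) =
    escort_mean m T (1 - lam) (restr pi S) ->
  dom_phi m T lam th ->
  (renyi m (1 - lam) pi (qfam m T lam ths) <=
   renyi m (1 - lam) pi (qfam m T lam th))%E.
Proof.
move=> l0 a0 hA hS hQs mpi pi0 hQp ds hesc dt.
have l1 : lam < 1 by lra.
have e1 : 1 - lam - 1 = - lam by ring.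
have [zs [zs0 hzs]] := dom_facts (hA ths) ds.
have [z [z0 hz]] := dom_facts (hA th) dt.
have Ssupp : S = supp T lam ths by rewrite hS.
have huu : forall x, (0 < 1 + lam * dotv th (T x)) = (0 < 1 + lam * dotv ths (T x)).
  move=> x; have := congr1 (fun A => A x) (etrans (hS _ dt) (esym (hS _ ds))).
  rewrite /supp /= => h; apply/idP/idP => H; first by rewrite -h.
  by rewrite h.
have qsE : qfam m T lam ths = fun x => ee lam (1 + lam * dotv ths (T x)) / zs.
  by rewrite (qfamE zs0 hzs); apply/funext => x; rewrite expcE.
have qE : qfam m T lam th = fun x => ee lam (1 + lam * dotv th (T x)) / z.
  by rewrite (qfamE z0 hz); apply/funext => x; rewrite expcE.
have [iqs Iqs] := int_q mT zs0 hzs.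
have [iq Iq] := int_q mT z0 hz.
have iqs' : m.-integrable setT (EFin \o (fun x => ee lam (1 + lam * dotv ths (T x)) / zs)).
  by apply: (eqI iqs) => x /=; rewrite expcE.
have iq' : m.-integrable setT (EFin \o (fun x => ee lam (1 + lam * dotv th (T x)) / z)).
  by apply: (eqI iq) => x /=; rewrite expcE.
have Iqs' : Rintegral m setT (fun x => ee lam (1 + lam * dotv ths (T x)) / zs) = 1.
  by rewrite -[RHS]Iqs; apply: eq_Rintegral => x _; rewrite expcE.
have Iq' : Rintegral m setT (fun x => ee lam (1 + lam * dotv th (T x)) / z) = 1.
  by rewrite -[RHS]Iq; apply: eq_Rintegral => x _; rewrite expcE.
have mqs : measurable_fun setT (fun x => ee lam (1 + lam * dotv ths (T x)) / zs).
  exact/measurable_EFinP/(measurable_int _ iqs').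
have := hQs ths ds; rewrite /compatible /= qsE => -[/andP[hQ1 hQ2] hBq].
have wE : (\int[m]_x ((ee lam (1 + lam * dotv ths (T x)) / zs) `^ (1 - lam))%:E =
    \int[m]_x ((restr (fun x => ee lam (1 + lam * dotv ths (T x)) / zs)
                    (supp T lam ths) x) `^ (1 - lam))%:E)%E.
  apply: eq_integral => x _; rewrite restr_ee; exact: erefl.
rewrite -wE in hQ1 hQ2.
have iw := int_pow mqs hQ2.
have Q0 := Rint_gt0 (introT andP (conj hQ1 hQ2)).
have iBq : forall i, m.-integrable setT (EFin \o (fun x => T x 0 i *
    (ee lam (1 + lam * dotv ths (T x)) / zs) `^ (1 - lam))).
  move=> i; apply: (eqI (hBq i)) => x /=; rewrite restr_ee; exact: erefl.
have := hQp ths ds; rewrite /compatible /= => -[/andP[hA1 hA2] hB].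
have mpS : measurable_fun setT
    (fun x => if 0 < 1 + lam * dotv ths (T x) then pi x else 0).
  apply: measurable_fun_ifT.
  - exact: measurable_fun_ltr (measurable_cst _) (mu lam mT ths).
  - exact: mpi.
  - exact: measurable_cst.
have pE : (\int[m]_x ((if 0 < 1 + lam * dotv ths (T x) then pi x else 0)
      `^ (1 - lam))%:E =
    \int[m]_x ((restr pi (supp T lam ths) x) `^ (1 - lam))%:E)%E.
  apply: eq_integral => x _; rewrite restr_if; exact: erefl.
rewrite -pE in hA1 hA2.
have ip := int_pow mpS hA2.
have A0 := Rint_gt0 (introT andP (conj hA1 hA2)).
have iB : forall i, m.-integrable setT (EFin \o (fun x => T x 0 i *
    (if 0 < 1 + lam * dotv ths (T x) then pi x else 0) `^ (1 - lam))).
  move=> i; apply: (eqI (hB i)) => x /=; rewrite restr_if; exact: erefl.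
pose w x := (ee lam (1 + lam * dotv ths (T x)) / zs) `^ (1 - lam).
pose p x := (if 0 < 1 + lam * dotv ths (T x) then pi x else 0) `^ (1 - lam).
pose Q := Rintegral m setT w.
pose A := Rintegral m setT p.
pose Bq i := Rintegral m setT (fun x => T x 0 i * w x).
pose B i := Rintegral m setT (fun x => T x 0 i * p x).
have hBi : forall i, Bq i = Q / A * B i.
  move=> i; have := congr1 (fun M : 'rV_n => M 0 i) hesc; rewrite qsE !mxE.
  rewrite -/(Q) -/(Bq i).
  have -> : Rintegral m setT (fun x => T x 0 i * restr pi S x `^ (1 - lam)) = B i.
    by apply: eq_Rintegral => x _; rewrite Ssupp restr_if.
  have -> : Rintegral m setT (fun x => restr pi S x `^ (1 - lam)) = A.
    by apply: eq_Rintegral => x _; rewrite Ssupp restr_if.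
  exact: div_eq.
have key : forall t : 'rV[R]_n,
    Rintegral m setT (fun x => (1 + lam * dotv t (T x)) * w x) =
    Q / A * Rintegral m setT (fun x => (1 + lam * dotv t (T x)) * p x).
  move=> t; have [_ ->] := lin_F lam t iw iBq; have [_ ->] := lin_F lam t ip iB.
  rewrite -/(Q) -/(A).
  under eq_bigr do rewrite -/(Bq _) hBi.
  exact: alg_key.
have [iLt _] := lin_F lam th iw iBq.
have [iPt _] := lin_F lam th ip iB.
have [iPs _] := lin_F lam ths ip iB.
have hY := young_int l0 l1 z0 zs0 huu iq' Iq' iqs' Iqs' iLt.
have hE := eq_int l0 l1 zs0 iqs' Iqs'.
have c0 : 0 < Q / A by rewrite divr_gt0.
have hIs : Q / A * Rintegral m setT (fun x => (1 + lam * dotv ths (T x)) * p x)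
    = zs `^ lam.
  by rewrite -(key ths); exact: hE.
have [h1 h2] := arith (Rintegral m setT (fun x => (1 + lam * dotv th (T x)) * p x))
  c0 (powR_gt0 lam z0) (powR_gt0 lam zs0) hIs.
rewrite /renyi (_ : (1 - lam == 1) = false); last first.
  by apply/negbTE; rewrite subr_eq addrC -subr_eq subrr eq_sym.
rewrite qE.
rewrite (rd_int mT l0 l1 z0 huu mpi pi0 iPt).
rewrite (rd_int mT l0 l1 zs0 (fun x => erefl) mpi pi0 iPs).
case: (ltrgtP lam 0) => hl; last by move: l0; rewrite hl eqxx.
  apply: lee_wpmul2l; first by rewrite e1 invrN lee_fin oppr_ge0 invr_le0 ltW.
  apply: elog_le; apply: leeD2r; rewrite lee_fin; apply: h2.
  rewrite -(key th); exact: (proj2 hY hl).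
apply: lee_nmul; first by rewrite e1 invrN oppr_lt0 invr_gt0.
apply: elog_le; apply: leeD2r; rewrite lee_fin; apply: h1.
rewrite -(key th); exact: (proj1 hY hl).
Qed.

End Main.

Section KLpw.
Context (R : realType).

Definition Hf (a ts zs : R) :=
  (if a == 0 then 0 else a * (ln a - ts + ln zs)) + expR ts / zs - a.

Lemma ln_expdiv (t z : R) : 0 < z -> ln (expR t / z) = t - ln z.
Proof.
move=> z0; rewrite ln_div ?posrE ?expR_gt0 // expRK //.
Qed.

Lemma kl_pw (a ts t zs z : R) : 0 <= a -> 0 < zs -> 0 < z ->
  (if a == 0 then 0%E else if expR t / z == 0 then +oo%E
   else (a * ln (a / (expR t / z)))%:E) =
  (Hf a ts zs + (a - expR ts / zs + (ln z - ln zs) * a + a * (ts - t)))%:E.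
Proof.
move=> a0 zs0 z0; rewrite /Hf.
have [->|an] := eqVneq a 0; first by congr EFin; ring.
have q0 : 0 < expR t / z by rewrite divr_gt0 ?expR_gt0.
rewrite gt_eqF //; congr EFin.
have a0' : 0 < a by rewrite lt_neqAle eq_sym an a0.
rewrite ln_div ?posrE // ln_expdiv //; ring.
Qed.

Lemma Hf_ge0 (a ts zs : R) : 0 <= a -> 0 < zs -> 0 <= Hf a ts zs.
Proof.
move=> a0 zs0; rewrite /Hf.
have qs0 : 0 < expR ts / zs by rewrite divr_gt0 ?expR_gt0.
have [->|an] := eqVneq a 0; first by rewrite subr0 add0r ltW.
have a0' : 0 < a by rewrite lt_neqAle eq_sym an a0.
set qs := expR ts / zs.
have hl : ln (qs / a) <= qs / a - 1.
  have h1 : -1 < qs / a - 1.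
    have : 0 < qs / a by rewrite divr_gt0.
    lra.
  have := le_ln1Dx h1; rewrite (_ : 1 + (qs / a - 1) = qs / a) //; ring.
have e : ln (qs / a) = ts - ln zs - ln a by rewrite ln_div ?posrE // ln_expdiv.
rewrite e in hl.
have : a * (ts - ln zs - ln a) <= a * (qs / a - 1) by rewrite ler_wpM2l // ltW.
have -> : a * (qs / a - 1) = qs - a by field; rewrite gt_eqF.
move=> h.
have -> : a * (ln a - ts + ln zs) = - (a * (ts - ln zs - ln a)) by ring.
lra.
Qed.

End KLpw.

Section Jensen.
Context (R : realType) (n : nat) (d : measure_display) (X : measurableType d)
  (m : {measure set X -> \bar R}) (T : X -> 'rV[R]_n).
Hypothesis mT : forall i : 'I_n, measurable_fun setT (fun x => T x 0 i).

Lemma dot_diff (th ths : 'rV[R]_n) x :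
  dotv th (T x) - dotv ths (T x) =
  \sum_(i < n) (th 0 i - ths 0 i) * T x 0 i.
Proof.
rewrite /dotv -sumrB; apply: eq_bigr => i _; ring.
Qed.

Lemma jensen (th ths : 'rV[R]_n) z zs : 0 < z -> 0 < zs ->
  (\int[m]_x (expR (dotv th (T x)))%:E = z%:E)%E ->
  m.-integrable setT (EFin \o (fun x => expR (dotv ths (T x)) / zs)) ->
  Rintegral m setT (fun x => expR (dotv ths (T x)) / zs) = 1 ->
  (forall i, m.-integrable setT
     (EFin \o (fun x => T x 0 i * (expR (dotv ths (T x)) / zs)))) ->
  \sum_(i < n) (th 0 i - ths 0 i) *
     Rintegral m setT (fun x => T x 0 i * (expR (dotv ths (T x)) / zs))
  <= ln z - ln zs.
Proof.
move=> z0 zs0 hz iqs Iqs iB.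
set c := \sum_(i < n) _.
have ie : m.-integrable setT (EFin \o (fun x => expR (dotv th (T x)))).
  have := @int_expc R n d X m T 0 mT th z z0.
  rewrite /expc eqxx; apply; exact: hz.
have ie' := integrableZ_R zs^-1 ie.
have Ie : Rintegral m setT (fun x => zs^-1 * expR (dotv th (T x))) = z / zs.
  by rewrite RintegralZl // /Rintegral hz /= mulrC.
have i0 := integrableZ_R (expR c * (1 - c)) iqs.
have [iR IR] := Rint_lin (index_enum 'I_n) (fun i => th 0 i - ths 0 i) (expR c) i0 iB.
rewrite RintegralZl // Iqs mulr1 in IR.
have hle : expR c <= z / zs.
  rewrite -Ie (_ : expR c = expR c * (1 - c) + expR c * c); last by ring.
  rewrite -[X in _ + _ * X]/c -IR.
  apply: le_Rintegral => // x _.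
  set qs := expR (dotv ths (T x)) / zs.
  have qs0 : 0 <= qs by rewrite divr_ge0 ?expR_ge0 // ltW.
  have e1 : \sum_(i <- index_enum 'I_n) (th 0 i - ths 0 i) * (T x 0 i * qs) =
      qs * (dotv th (T x) - dotv ths (T x)).
    rewrite dot_diff big_distrr; apply: eq_bigr => i _ /=; ring.
  rewrite e1.
  have e2 : zs^-1 * expR (dotv th (T x)) =
      qs * expR (dotv th (T x) - dotv ths (T x)).
    rewrite /qs expRB; field; rewrite !gt_eqF ?expR_gt0 //.
  rewrite e2.
  have := expR_tangent c (dotv th (T x) - dotv ths (T x)) => h.
  have := ler_wpM2l qs0 h.
  set D := dotv th (T x) - dotv ths (T x).
  move=> h2; apply: le_trans h2.
  rewrite le_eqVlt; apply/orP; left; apply/eqP; ring.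
rewrite -ln_div ?posrE //.
have := hle; rewrite -ler_ln ?posrE ?expR_gt0 ?divr_gt0 // expRK //.
Qed.

End Jensen.

Section KLint.
Context (R : realType) (n : nat) (d : measure_display) (X : measurableType d)
  (m : {measure set X -> \bar R}) (T : X -> 'rV[R]_n).
Hypothesis mT : forall i : 'I_n, measurable_fun setT (fun x => T x 0 i).

Lemma mHf (pi : X -> R) (ths : 'rV[R]_n) zs : measurable_fun setT pi ->
  measurable_fun setT (fun x => Hf (pi x) (dotv ths (T x)) zs).
Proof.
move=> mpi; rewrite /Hf.
apply: measurable_funB => //; apply: measurable_funD.
  apply: measurable_fun_ifT.
  - exact: measurable_fun_eqr mpi (measurable_cst _).
  - exact: measurable_cst.
  - apply: measurable_funM => //; apply: measurable_funD; last exact: measurable_cst.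
    apply: measurable_funB; last exact: mdot.
    by apply: measurableT_comp; [exact: measurable_ln | exact: mpi].
apply: measurable_funM; last exact: measurable_cst.
by apply: measurableT_comp; [exact: measurable_expR | exact: mdot].
Qed.

Lemma integrableB_R (f g : X -> R) :
  m.-integrable setT (EFin \o f) -> m.-integrable setT (EFin \o g) ->
  m.-integrable setT (EFin \o (fun x => f x - g x)).
Proof.
move=> hf hg; have := integrableD_R hf (integrableZ_R (-1) hg).
by move=> h; apply: (eqI h) => x /=; rewrite mulN1r.
Qed.

Lemma kl_int (pi : X -> R) (ths th : 'rV[R]_n) zs z : 0 < zs -> 0 < z ->
  measurable_fun setT pi -> (forall x, 0 <= pi x) ->
  m.-integrable setT (EFin \o pi) -> Rintegral m setT pi = 1 ->
  m.-integrable setT (EFin \o (fun x => expR (dotv ths (T x)) / zs)) ->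
  Rintegral m setT (fun x => expR (dotv ths (T x)) / zs) = 1 ->
  (forall i, m.-integrable setT (EFin \o (fun x => T x 0 i * pi x))) ->
  (\int[m]_x kl_integrand pi (fun x => (expR (dotv th (T x)) / z)%R) x =
   \int[m]_x (Hf (pi x) (dotv ths (T x)) zs)%:E +
   (ln z - ln zs + \sum_(i < n) (ths 0 i - th 0 i) *
      Rintegral m setT (fun x => T x 0 i * pi x))%:E)%E.
Proof.
move=> zs0 z0 mpi pi0 ipi Ipi iqs Iqs iB.
rewrite /kl_integrand.
under eq_integral => x _ do rewrite (kl_pw (dotv ths (T x)) (dotv th (T x)) (pi0 x) zs0 z0) EFinD.
have i1 := integrableD_R (integrableB_R ipi iqs) (integrableZ_R (ln z - ln zs) ipi).
set F0 := fun x => pi x - expR (dotv ths (T x)) / zs + (ln z - ln zs) * pi x.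
have [iL IL] := Rint_lin (index_enum 'I_n) (fun i => ths 0 i - th 0 i) 1 i1 iB.
have e : forall x, pi x - expR (dotv ths (T x)) / zs + (ln z - ln zs) * pi x +
    pi x * (dotv ths (T x) - dotv th (T x)) =
    F0 x + 1 * \sum_(i <- index_enum 'I_n) (ths 0 i - th 0 i) * (T x 0 i * pi x).
  move=> x; rewrite dot_diff mul1r big_distrr /F0; congr (_ + _).
  by apply: eq_bigr => i _ /=; ring.
rewrite (integralD_ge0_int (g := fun x => pi x - expR (dotv ths (T x)) / zs +
    (ln z - ln zs) * pi x + pi x * (dotv ths (T x) - dotv th (T x)))).
- congr (_ + _)%E; congr EFin.
  rewrite (eq_Rintegral _ (fun x _ => e x)) IL mul1r.
  have Ipi' : Rintegral m setT (fun x => pi x) = 1 := Ipi.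
  rewrite /F0 RintegralD // ?RintegralB // ?RintegralZl // ?Ipi' ?Iqs.
    by rewrite subrr add0r mulr1.
    by apply: integrableB_R; [exact: ipi | exact: iqs].
  by apply: integrableZ_R; exact: ipi.
- by move=> x; rewrite lee_fin Hf_ge0.
- exact/measurable_EFinP/mHf.
- by apply: (eqI iL) => x /=; rewrite e.
Qed.

End KLint.

Section Main0.
Context (R : realType) (n : nat) (d : measure_display) (X : measurableType d)
  (m : {measure set X -> \bar R}) (T : X -> 'rV[R]_n).
Hypothesis mT : forall i : 'I_n, measurable_fun setT (fun x => T x 0 i).

Lemma expc0 (t : R) : expc 0 t = expR t.
Proof. by rewrite /expc eqxx. Qed.

Lemma restr0 (f : X -> R) (th : 'rV[R]_n) x : restr f (supp T 0 th) x = f x.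
Proof. by rewrite /restr indicE mem_set ?mul1r // /supp /= mul0r addr0 ltr01. Qed.

Lemma main_eq0 (S : set X) (pi : X -> R) (ths th : 'rV[R]_n) :
  (forall th, phi m T 0 th != -oo%E) ->
  (forall th, dom_phi m T 0 th -> supp T 0 th = S) ->
  Qcompatible m T 0 1 (qfam m T 0 ths) ->
  measurable_fun setT pi -> (forall x, 0 <= pi x) ->
  (\int[m]_x (pi x)%:E = 1)%E ->
  Qcompatible m T 0 1 pi ->
  dom_phi m T 0 ths ->
  escort_mean m T 1 (qfam m T 0 ths) = escort_mean m T 1 (restr pi S) ->
  dom_phi m T 0 th ->
  (renyi m 1 pi (qfam m T 0 ths) <= renyi m 1 pi (qfam m T 0 th))%E.
Proof.
move=> hA hS hQs mpi pi0 hpi hQp ds hesc dt.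
have [zs [zs0 hzs]] := dom_facts (hA ths) ds.
have [z [z0 hz]] := dom_facts (hA th) dt.
have qsE : qfam m T 0 ths = fun x => expR (dotv ths (T x)) / zs.
  by rewrite (qfamE zs0 hzs); apply/funext => x; rewrite expc0.
have qE : qfam m T 0 th = fun x => expR (dotv th (T x)) / z.
  by rewrite (qfamE z0 hz); apply/funext => x; rewrite expc0.
have hz' : (\int[m]_x (expR (dotv th (T x)))%:E = z%:E)%E.
  by rewrite -hz; apply: eq_integral => x _; rewrite expc0.
have [iqs Iqs] := int_q mT zs0 hzs.
have iqs' : m.-integrable setT (EFin \o (fun x => expR (dotv ths (T x)) / zs)).
  by apply: (eqI iqs) => x /=; rewrite expc0.
have Iqs' : Rintegral m setT (fun x => expR (dotv ths (T x)) / zs) = 1.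
  by rewrite -[RHS]Iqs; apply: eq_Rintegral => x _; rewrite expc0.
have qs0 : forall x, 0 <= expR (dotv ths (T x)) / zs.
  by move=> x; rewrite divr_ge0 ?expR_ge0 // ltW.
have ipi : m.-integrable setT (EFin \o pi).
  apply/integrableP; split; first exact/measurable_EFinP.
  under eq_integral do rewrite gee0_abs ?lee_fin //.
  by rewrite hpi ltry.
have Ipi : Rintegral m setT pi = 1 by rewrite /Rintegral hpi.
have Ssupp : S = supp T 0 ths by rewrite hS.
have := hQs ths ds; rewrite /compatible /= qsE => -[_ hBq].
have iBq : forall i, m.-integrable setT
    (EFin \o (fun x => T x 0 i * (expR (dotv ths (T x)) / zs))).
  by move=> i; apply: (eqI (hBq i)) => x /=; rewrite restr0 powRr1.
have := hQp ths ds; rewrite /compatible /= => -[_ hB].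
have iB : forall i, m.-integrable setT (EFin \o (fun x => T x 0 i * pi x)).
  by move=> i; apply: (eqI (hB i)) => x /=; rewrite restr0 powRr1.
have hb : forall i, Rintegral m setT (fun x => T x 0 i * (expR (dotv ths (T x)) / zs)) =
    Rintegral m setT (fun x => T x 0 i * pi x).
  move=> i; have := congr1 (fun M : 'rV_n => M 0 i) hesc; rewrite qsE !mxE.
  rewrite Ssupp.
  have e1 : Rintegral m setT (fun x => T x 0 i * (expR (dotv ths (T x)) / zs) `^ 1)
      = Rintegral m setT (fun x => T x 0 i * (expR (dotv ths (T x)) / zs)).
    by apply: eq_Rintegral => x _; rewrite powRr1.
  have e2 : Rintegral m setT (fun x => (expR (dotv ths (T x)) / zs) `^ 1) = 1.
    by rewrite -[RHS]Iqs'; apply: eq_Rintegral => x _; rewrite powRr1.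
  have e3 : Rintegral m setT (fun x => T x 0 i * restr pi (supp T 0 ths) x `^ 1)
      = Rintegral m setT (fun x => T x 0 i * pi x).
    by apply: eq_Rintegral => x _; rewrite restr0 powRr1.
  have e4 : Rintegral m setT (fun x => restr pi (supp T 0 ths) x `^ 1) = 1.
    by rewrite -[RHS]Ipi; apply: eq_Rintegral => x _; rewrite restr0 powRr1.
  by rewrite e1 e2 e3 e4 !divr1.
rewrite /renyi eqxx /KL qE.
rewrite (kl_int mT ths zs0 zs0 mpi pi0 ipi Ipi iqs' Iqs' iB).
rewrite (kl_int mT th zs0 z0 mpi pi0 ipi Ipi iqs' Iqs' iB).
apply: leeD2l; rewrite lee_fin subrr add0r big1; last first.
  by move=> i _; rewrite subrr mul0r.
have J := jensen mT z0 zs0 hz' iqs' Iqs' iBq.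
have eJ : \sum_(i < n) (th 0 i - ths 0 i) *
    Rintegral m setT (fun x => T x 0 i * (expR (dotv ths (T x)) / zs)) =
  - \sum_(i < n) (ths 0 i - th 0 i) * Rintegral m setT (fun x => T x 0 i * pi x).
  rewrite -sumrN; apply: eq_bigr => i _; rewrite hb; ring.
rewrite eJ in J.
move: J; set s := \sum_(i < n) _.
move=> J; rewrite -subr_ge0 in J; rewrite (_ : ln z - ln zs + s = ln z - ln zs - - s) //.
by rewrite opprK.
Qed.

End Main0.

Unset Implicit Arguments.

Theorem proposition7 (R : realType) (n : nat) (d : measure_display)
  (X : measurableType d) (m : {measure set X -> \bar R})
  (T : X -> 'rV[R]_n) (lam alpha : R) (S : set X) (pi : X -> R)
  (th_star : 'rV[R]_n) :
  (forall i : 'I_n, measurable_fun setT (fun x => T x 0 i)) ->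
  alpha = 1 - lam ->
  AssumptionA m T lam alpha ->
  AssumptionB m T lam alpha S ->
  is_density m pi ->
  Qcompatible m T lam alpha pi ->
  dom_phi m T lam th_star ->
  escort_mean m T alpha (qfam m T lam th_star) =
    escort_mean m T alpha (restr pi S) ->
  forall th : 'rV[R]_n, dom_phi m T lam th ->
    (renyi m alpha pi (qfam m T lam th_star) <=
     renyi m alpha pi (qfam m T lam th))%E.
Proof.
move=> mT -> [a0 [hphi _]] [_ [hS hQq]] [mpi [pi0 int1]] hQp ds hesc th dt.
case: (eqVneq lam 0) => [l0|l0].
  subst lam; rewrite subr0 in hQq hQp hesc *.
  exact: (main_eq0 mT hphi hS (hQq th_star ds) mpi pi0 int1 hQp ds hesc dt).
exact: (main_neq0 mT l0 a0 hphi hS (hQq th_star ds) mpi pi0 hQp ds hesc dt).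
Qed.
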